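(* Let $L>0$, $\theta_1>0$, $\theta_2>0$, $0\le\epsilon<1$, $\omega\ge0$, $0<v_{\max}<1$, $c(t)=\theta_1(1+\epsilon\cos(\omega t))$, $D(t,x)=\frac{L-x}{c(t)}$, $\Gamma(x,U)=\frac{\theta_2x}{(1+\theta_2x)(1-U)}-\frac{U}{1-U}$ and $f(t,x,U)=-c(t)\Gamma(x,U)$. Suppose one of the conditions (i), (ii), (iii) holds: (i) $0\le\frac{\epsilon\omega}{(1-\epsilon)^2}<\frac{\theta_1\theta_2}{(1+\theta_2L)^2}$; (ii) $\frac{\theta_1\theta_2}{(1+\theta_2L)^2}<\frac{\epsilon\omega}{(1-\epsilon)^2}<\frac{\theta_1}{L}$ and $\theta_2<\frac1L$; (iii) $\frac{\theta_1\theta_2}{(1+\theta_2L)^2}<\frac{\epsilon\omega}{(1-\epsilon)^2}<\frac{4\theta_1\theta_2}{(1+\theta_2L)^2}$ and $\theta_2>\frac1L$. Then $$\frac{\partial D}{\partial t}(t,x)+\frac{\partial D}{\partial x}(t,x)f(t,x,U)<1$$ for all $t\ge0$, all $x\in(0,L)$ and all $U\in[0,v_{\max}]$.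
   Context: This is the feasibility condition (the delay rate $\frac{d}{dt}D(t,x(t))$ is bounded by one) for the screw extruder model $\dot x(t)=f(t,x(t),U(t-D(t,x(t))))$, where $x$ is the length of the fully filled zone of the extruder and $U$ the inlet filling ratio. *)

(* Defs.v *)
From Stdlib Require Import Reals Lra.
Open Scope R_scope.

Definition cfun (th1 eps om t : R) : R := th1 * (1 + eps * cos (om * t)).

Definition Dfun (L th1 eps om t x : R) : R := (L - x) / cfun th1 eps om t.

Definition Gam (th2 x U : R) : R :=
  th2 * x / ((1 + th2 * x) * (1 - U)) - U / (1 - U).

Definition ffun (th1 th2 eps om t x U : R) : R :=
  - cfun th1 eps om t * Gam th2 x U.

(* Main.v *)
Require Import Defs.
From Stdlib Require Import Reals Lra.
From Coquelicot Require Import Coquelicot.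
Open Scope R_scope.

Lemma dt_lem L th1 eps om x t : th1 <> 0 -> 1 + eps * cos (om * t) <> 0 ->
  derivable_pt_lim (fun s => Dfun L th1 eps om s x) t
   ((L-x) * (th1*(eps*(om * sin(om*t)))) / (cfun th1 eps om t)^2).
Proof.
intros. apply is_derive_Reals. unfold Dfun, cfun. auto_derive; [auto|]. field; auto.
Qed.

Lemma dx_lem L th1 eps om x t : th1 <> 0 -> 1 + eps * cos (om * t) <> 0 ->
  derivable_pt_lim (fun y => Dfun L th1 eps om t y) x (-1 / cfun th1 eps om t).
Proof.
intros. apply is_derive_Reals. unfold Dfun, cfun. auto_derive; [auto|]. field; auto.
Qed.

Theorem mainTheorem4 (L th1 th2 eps om vmax : R)
  (hL : 0 < L) (h1 : 0 < th1) (h2 : 0 < th2)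
  (he0 : 0 <= eps) (he1 : eps < 1) (hom : 0 <= om)
  (hv0 : 0 < vmax) (hv1 : vmax < 1)
  (hcond :
     (0 <= eps * om / (1 - eps) ^ 2 /\
      eps * om / (1 - eps) ^ 2 < th1 * th2 / (1 + th2 * L) ^ 2)
  \/ (th1 * th2 / (1 + th2 * L) ^ 2 < eps * om / (1 - eps) ^ 2 /\
      eps * om / (1 - eps) ^ 2 < th1 / L /\ th2 < 1 / L)
  \/ (th1 * th2 / (1 + th2 * L) ^ 2 < eps * om / (1 - eps) ^ 2 /\
      eps * om / (1 - eps) ^ 2 < 4 * th1 * th2 / (1 + th2 * L) ^ 2 /\
      th2 > 1 / L)) :
  forall t x U : R, 0 <= t -> 0 < x -> x < L -> 0 <= U -> U <= vmax ->
    exists dDt dDx : R,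
      derivable_pt_lim (fun s => Dfun L th1 eps om s x) t dDt /\
      derivable_pt_lim (fun y => Dfun L th1 eps om t y) x dDx /\
      dDt + dDx * ffun th1 th2 eps om t x U < 1.
Proof.
intros t x U ht hx0 hxL hU0 hU1.
set (k := eps * om / (1 - eps) ^ 2).
assert (hk0 : 0 <= k) by (unfold k, Rdiv; apply Rmult_le_pos; [nra| apply Rlt_le, Rinv_0_lt_compat; apply pow_lt; lra]).
assert (hcos := COS_bound (om * t)). assert (hsin := SIN_bound (om * t)).
assert (hc1 : th1 * (1 - eps) <= cfun th1 eps om t) by (unfold cfun; assert (0 <= eps * (cos (om * t) + 1)) by (apply Rmult_le_pos; lra); apply Rmult_le_compat_l; lra).
assert (hcpos : 0 < cfun th1 eps om t) by nra.
assert (hne : 1 + eps * cos (om * t) <> 0) by nra.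
exists ((L-x) * (th1*(eps*(om * sin(om*t)))) / (cfun th1 eps om t)^2), (-1 / cfun th1 eps om t).
split; [apply dt_lem; lra|]. split; [apply dx_lem; lra|].
assert (hg : 0 < (L - x) * (1 + th2 * x)) by (apply Rmult_lt_0_compat; nra).
assert (hkey : k * ((L - x) * (1 + th2 * x)) < th1).
{ assert (hsq : 0 < (1 + th2 * L) ^ 2) by nra.
  assert (hamgm : 4 * th2 * ((L - x) * (1 + th2 * x)) <= (1 + th2 * L) ^ 2)
    by (assert (hh := pow2_ge_0 (th2*(L-x) - (1+th2*x))); simpl in *; nra).
  destruct hcond as [[_ hc] | [[_ [hc hth]] | [_ [hc _]]]].
  - apply Rlt_le_trans with (th1 * th2 / (1 + th2 * L) ^ 2 * ((L - x) * (1 + th2 * x))).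
    + apply Rmult_lt_compat_r; auto.
    + apply Rmult_le_reg_r with ((1 + th2 * L) ^ 2); auto.
      replace (th1 * th2 / (1 + th2 * L) ^ 2 * ((L - x) * (1 + th2 * x)) * (1 + th2 * L) ^ 2)
        with (th1 * th2 * ((L - x) * (1 + th2 * x))) by (field; nra). nra.
  - assert (hL1 : th2 * L < 1).
    { apply Rmult_lt_compat_r with (r := L) in hth; auto.
      replace (1 / L * L) with 1 in hth by (field; nra). lra. }
    assert (hgL : (L - x) * (1 + th2 * x) <= L) by nra.
    apply Rlt_le_trans with (th1 / L * ((L - x) * (1 + th2 * x))).
    + apply Rmult_lt_compat_r; auto.
    + apply Rmult_le_reg_r with L; auto.
      replace (th1 / L * ((L - x) * (1 + th2 * x)) * L) with (th1 * ((L - x) * (1 + th2 * x))) by (field; nra). nra.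
  - apply Rlt_le_trans with (4 * th1 * th2 / (1 + th2 * L) ^ 2 * ((L - x) * (1 + th2 * x))).
    + apply Rmult_lt_compat_r; auto.
    + apply Rmult_le_reg_r with ((1 + th2 * L) ^ 2); auto.
      replace (4 * th1 * th2 / (1 + th2 * L) ^ 2 * ((L - x) * (1 + th2 * x)) * (1 + th2 * L) ^ 2)
        with (th1 * (4 * th2 * ((L - x) * (1 + th2 * x)))) by (field; nra). nra. }
set (c := cfun th1 eps om t) in *.
set (s := sin (om * t)) in *.
assert (hA : (L-x) * (th1*(eps*(om * s))) / c^2 <= (L - x) * k / th1).
{ unfold k. assert (0 < 1 - eps) by lra.
  assert (hnum : 0 <= (L - x) * th1 * eps * om) by
    (repeat apply Rmult_le_pos; lra).
  assert (hc2 : (th1 * (1 - eps))^2 <= c^2) by (apply pow_incr; nra).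
  apply Rle_trans with ((L - x) * th1 * eps * om / c^2).
  - unfold Rdiv. apply Rmult_le_compat_r. apply Rlt_le, Rinv_0_lt_compat; nra.
    nra.
  - apply Rle_trans with ((L - x) * th1 * eps * om / (th1 * (1 - eps))^2).
    + unfold Rdiv. apply Rmult_le_compat_l; auto.
      apply Rinv_le_contravar; [apply pow_lt; nra | exact hc2].
    + right. field. split; lra. }
assert (hG : -1 / c * ffun th1 th2 eps om t x U
             = 1 - 1 / ((1 + th2 * x) * (1 - U))).
{ unfold ffun, Gam. fold c. field. repeat split; nra. }
rewrite hG.
assert (h1U : 1 / (1 + th2 * x) <= 1 / ((1 + th2 * x) * (1 - U))).
{ apply Rmult_le_compat_l; [lra|]. apply Rinv_le_contravar; nra. }
assert (hk2 : (L - x) * k / th1 < 1 / (1 + th2 * x)).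
{ apply Rmult_lt_reg_r with (th1 * (1 + th2 * x)); [nra|].
  field_simplify; nra. }
lra.
Qed.
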